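(* Let $K$ be an algebraically closed field, $m\ge1$ and $2\le a\le b$ integers, $S=K[[x,y_1,\dots,y_m]]$, $g=g(y_1,\dots,y_m)\in(\underline{y})^b\setminus(\underline{y})^{b+1}$, $A=S/(x^a-g)$, $Q=(y_1,\dots,y_m)A$. Let $d=\gcd(a,b)$, $a'=a/d$, $b'=b/d$, $n_k=\lfloor kb/a\rfloor$ for $k=1,\dots,a-1$, and for $n\ge1$ define \[J_n=Q^n+xQ^{n-n_1}+x^2Q^{n-n_2}+\cdots+x^{a-1}Q^{n-n_{a-1}},\] \[I_n=\big(x^ky_1^{i_1}\cdots y_m^{i_m} : k,i_1,\dots,i_m\in\mathbb{Z}_{\ge0},\ kb'+(i_1+\cdots+i_m)a'\ge n\big)A.\] Then $J_n=I_{na'}$ for every $n\ge1$.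
   Context: $(\underline{y})=(y_1,\dots,y_m)$; by convention $Q^j=A$ for $j\le0$. *)

(* Defs.v *)
From mathcomp Require Import all_boot all_order all_algebra.
Set Implicit Arguments. Unset Strict Implicit. Unset Printing Implicit Defensive.
Import GRing.Theory.
Local Open Scope ring_scope.

Section Ideals.
Variables (T : Type) (add mul : T -> T -> T) (zero one : T).

Definition is_ideal (I : T -> Prop) : Prop :=
  [/\ I zero, (forall u v, I u -> I v -> I (add u v))
    & (forall r u, I u -> I (mul r u))].

Definition ideal_gen (G : T -> Prop) : T -> Prop :=
  fun z => forall I, is_ideal I -> (forall u, G u -> I u) -> I z.

Definition principal (u : T) : T -> Prop := ideal_gen (fun z => z = u).

Definition ideal_sum (I J : T -> Prop) : T -> Prop :=
  ideal_gen (fun z => I z \/ J z).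

Definition ideal_mul (I J : T -> Prop) : T -> Prop :=
  ideal_gen (fun z => exists u v, [/\ I u, J v & z = mul u v]).

Definition ideal_pow (I : T -> Prop) (n : nat) : T -> Prop :=
  iter n (ideal_mul I) (principal one).

End Ideals.

(* exponents of monomials x^k y^alpha *)
Definition mon (m : nat) := (nat * {ffun 'I_m -> nat})%type.

(* formal power series over K in x, y_1..y_m: arbitrary coefficient maps *)
Definition ps (K : fieldType) (m : nat) := mon m -> K.

Section PS.
Variables (K : fieldType) (m : nat).

Definition ps_ind (e0 : mon m) : ps K m := fun e => if e == e0 then 1 else 0.
Definition ps_zero : ps K m := fun _ => 0.
Definition ps_one : ps K m := ps_ind (0%N, [ffun => 0%N]).
Definition ps_add (f g : ps K m) : ps K m := fun e => f e + g e.
Definition ps_opp (f : ps K m) : ps K m := fun e => - f e.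
Definition ps_sub (f g : ps K m) : ps K m := ps_add f (ps_opp g).
(* Cauchy product: sum over all exponent decompositions e = e1 + e2 *)
Definition ps_mul (f g : ps K m) : ps K m := fun e =>
  \sum_(k < e.1.+1)
   \sum_(t : {ffun 'I_m -> 'I_(\max_(i : 'I_m) e.2 i).+1}
          | [forall i, (t i <= e.2 i)%N])
     f (k : nat, [ffun i => nat_of_ord (t i)]) *
     g ((e.1 - k)%N, [ffun i => (e.2 i - t i)%N]).
Definition ps_pow (f : ps K m) (n : nat) : ps K m := iter n (ps_mul f) ps_one.

Definition ps_x : ps K m := ps_ind (1%N, [ffun => 0%N]).
Definition ps_y (i : 'I_m) : ps K m :=
  ps_ind (0%N, [ffun j => nat_of_bool (j == i)]).
Definition ps_ymon (al : {ffun 'I_m -> nat}) : ps K m :=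
  foldr (fun i acc => ps_mul (ps_pow (ps_y i) (al i)) acc) ps_one (enum 'I_m).

Definition Sideal_gen := ideal_gen ps_add ps_mul ps_zero.
Definition Sprincipal := principal ps_add ps_mul ps_zero.
Definition Sideal_sum := ideal_sum ps_add ps_mul ps_zero.
Definition Sideal_mul := ideal_mul ps_add ps_mul ps_zero.
Definition Sideal_pow := ideal_pow ps_add ps_mul ps_zero ps_one.

Definition Yideal : ps K m -> Prop := Sideal_gen (fun z => exists i, z = ps_y i).

Definition only_y (g : ps K m) : Prop := forall e : mon m, e.1 <> 0%N -> g e = 0.

(* lifts to S of J_n and I_N (both taken modulo (x^a - g) in the theorem) *)
Definition nk (a b k : nat) : nat := (k * b %/ a)%N.

Definition JS (a b n : nat) : ps K m -> Prop :=
  \big[Sideal_sum/Sideal_gen (fun _ => False)]_(k < a)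
     Sideal_mul (Sprincipal (ps_pow ps_x k)) (Sideal_pow Yideal (n - nk a b k)).

Definition IS (a' b' N : nat) : ps K m -> Prop :=
  Sideal_gen (fun z => exists (k : nat) (al : {ffun 'I_m -> nat}),
     (N <= k * b' + (\sum_(i < m) al i) * a')%N /\
     z = ps_mul (ps_pow ps_x k) (ps_ymon al)).

End PS.

(* Main.v *)
Require Import Defs.
From mathcomp Require Import all_boot all_order all_algebra.
From mathcomp Require Import zify.
From Stdlib Require Import FunctionalExtensionality.
Set Implicit Arguments. Unset Strict Implicit. Unset Printing Implicit Defensive.
Import GRing.Theory.

Section PSRing.
Variables (K : fieldType) (m : nat).
Local Open Scope ring_scope.

Definition madd (e1 e2 : mon m) : mon m :=
  ((e1.1 + e2.1)%N, [ffun i => (e1.2 i + e2.2 i)%N]).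
Definition msub (e1 e2 : mon m) : mon m :=
  ((e1.1 - e2.1)%N, [ffun i => (e1.2 i - e2.2 i)%N]).
Definition mle (e1 e2 : mon m) : bool :=
  (e1.1 <= e2.1)%N && [forall i, (e1.2 i <= e2.2 i)%N].
Definition mzero : mon m := (0%N, [ffun => 0%N]).

Lemma monP (e1 e2 : mon m) : e1.1 = e2.1 -> (forall i, e1.2 i = e2.2 i) -> e1 = e2.
Proof. case: e1 e2 => [k1 a1] [k2 a2] /= -> H; congr pair; apply/ffunP => i; exact: H. Qed.

Lemma mleP (e1 e2 : mon m) : reflect ((e1.1 <= e2.1)%N /\ forall i, (e1.2 i <= e2.2 i)%N) (mle e1 e2).
Proof. apply: (iffP andP) => [[h /forallP h2]|[h h2]]; split => //; exact/forallP. Qed.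

Ltac mono := first [ apply/mleP; split => [|i]; rewrite /= ?ffunE
                   | apply: monP => [|i]; rewrite /= ?ffunE ].

Lemma msubK (e p : mon m) : mle p e -> msub e (msub e p) = p.
Proof. move/mleP=> [h1 h2]; mono; first lia. have := h2 i; lia. Qed.
Lemma mle_msub (e p : mon m) : mle (msub e p) e.
Proof. mono; lia. Qed.
Lemma maddK (q r : mon m) : msub (madd q r) q = r.
Proof. mono; lia. Qed.
Lemma msub_madd (e q r : mon m) : msub e (madd q r) = msub (msub e q) r.
Proof. mono; lia. Qed.
Lemma madd_sub (q p : mon m) : mle q p -> madd q (msub p q) = p.
Proof. move/mleP=> [h1 h2]; mono; first lia. have := h2 i; lia. Qed.
Lemma mle_trans (a b c : mon m) : mle a b -> mle b c -> mle a c.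
Proof. move/mleP=> [h1 h2] /mleP [h3 h4]; mono; first lia. have := h2 i; have := h4 i; lia. Qed.
Lemma mle_addr (e q r : mon m) : mle q e -> mle r (msub e q) -> mle (madd q r) e.
Proof. move/mleP=> [h1 h2] /mleP [h3 h4]; mono; first (simpl in h3; lia).
  have := h2 i; have := h4 i; rewrite /= ffunE; lia. Qed.
Lemma mle_addl (q r : mon m) : mle q (madd q r).
Proof. mono; lia. Qed.
Lemma mle_subr (e p q : mon m) : mle q p -> mle p e -> mle (msub p q) (msub e q).
Proof. move/mleP=> [h1 h2] /mleP [h3 h4]; mono; first lia. have := h2 i; have := h4 i; lia. Qed.
Lemma mle0 (e : mon m) : mle mzero e.
Proof. by mono. Qed.
Lemma msub0 (e : mon m) : msub e mzero = e.
Proof. mono; lia. Qed.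

Definition bnd (e : mon m) := (\max_(i : 'I_m) e.2 i).+1.
Definition lowP (e : mon m) := [pred t : {ffun 'I_m -> 'I_(bnd e)} | [forall i, (t i <= e.2 i)%N]].
Definition lowf (e : mon m) (k : nat) (t : {ffun 'I_m -> 'I_(bnd e)}) : mon m :=
  (k, [ffun i => nat_of_ord (t i)]).
Definition low (e : mon m) : seq (mon m) :=
  [seq lowf k t | k <- iota 0 e.1.+1, t <- enum (lowP e)].

Lemma mul_low (f g : ps K m) (e : mon m) : ps_mul f g e = \sum_(p <- low e) f p * g (msub e p).
Proof.
rewrite /ps_mul big_allpairs_dep /=.
rewrite -(big_mkord xpredT (fun k => \sum_(t : {ffun 'I_m -> 'I_(bnd e)} | [forall i, (t i <= e.2 i)%N]) f (k, [ffun i => nat_of_ord (t i)]) * g ((e.1 - k)%N, [ffun i => (e.2 i - t i)%N]))) /index_iota subn0.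
apply: eq_bigr => k _; rewrite big_enum /=.

apply: eq_big => [t|t _]; first by rewrite inE.
congr (_ * g _); apply: monP => //= i; rewrite !ffunE //.
Qed.

Lemma low_uniq (e : mon m) : uniq (low e).
Proof.
apply: allpairs_uniq; [exact: iota_uniq | exact: enum_uniq | ].
move=> [k1 t1] [k2 t2] _ _ /= [-> /ffunP H]; congr pair; apply/ffunP => i.
apply/val_inj; have := H i; rewrite !ffunE; exact.
Qed.

Lemma mem_low (e p : mon m) : (p \in low e) = mle p e.
Proof.
apply/allpairsP/mleP.
- case=> [[k t]] [hk ht ->]; rewrite mem_iota in hk; rewrite mem_enum inE in ht; rewrite /lowf /=.
  simpl in hk, ht. split; first lia. by move=> i; rewrite ffunE; exact: (forallP ht i).
- case=> h1 h2.
  have hb : forall i, (p.2 i < bnd e)%N.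
    move=> i; rewrite /bnd ltnS; exact: leq_trans (h2 i) (leq_bigmax i).
  exists (p.1, [ffun i => inord (p.2 i) : 'I_(bnd e)]); split.
  + rewrite mem_iota /=; lia.
  + rewrite mem_enum inE; apply/forallP => i; rewrite ffunE inordK //; exact: h2.
  + rewrite /lowf; apply: monP => //= i; rewrite !ffunE inordK //.
Qed.

Lemma perm_sum (s1 s2 : seq (mon m)) (F : mon m -> K) :
  uniq s1 -> uniq s2 -> s1 =i s2 -> \sum_(p <- s1) F p = \sum_(p <- s2) F p.
Proof. move=> u1 u2 h; apply: perm_big; exact: uniq_perm. Qed.

Lemma psE (f g : ps K m) : (forall e, f e = g e) -> f = g.
Proof. exact: functional_extensionality. Qed.

Lemma mul_ind (e0 : mon m) (f : ps K m) (e : mon m) :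
  ps_mul (ps_ind K e0) f e = if mle e0 e then f (msub e e0) else 0.
Proof.
rewrite mul_low /ps_ind; case: ifP => h.
- rewrite (bigD1_seq e0) ?low_uniq ?mem_low //= eqxx mul1r big1 ?addr0 // => p /negbTE ->.
  by rewrite mul0r.
- rewrite big1_seq // => p /andP [_]; rewrite mem_low => hp.
  case: eqP => [ep|]; last by rewrite mul0r.
  by move: h; rewrite -ep hp.
Qed.

Lemma mulC (f g : ps K m) : ps_mul f g = ps_mul g f.
Proof.
apply: psE => e; rewrite !mul_low.
have u : uniq (map (msub e) (low e)).
  rewrite map_inj_in_uniq ?low_uniq // => p1 p2; rewrite !mem_low => h1 h2 eq.
  by rewrite -(msubK h1) eq msubK.
rewrite (@perm_sum (low e) (map (msub e) (low e))) ?low_uniq //; last first.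
  move=> q; rewrite mem_low; apply/idP/mapP => [h|[p _ ->]]; last exact: mle_msub.
  by exists (msub e q); rewrite ?mem_low ?mle_msub ?msubK.
rewrite big_map big_seq_cond [RHS]big_seq_cond; apply: eq_bigr => p /andP [].
by rewrite mem_low => h _; rewrite msubK // mulrC.
Qed.

Lemma sum_low_le (e p : mon m) (F : mon m -> K) : mle p e ->
  \sum_(q <- low p) F q = \sum_(q <- low e | mle q p) F q.
Proof.
move=> hp; rewrite -[RHS]big_filter; apply: perm_sum; rewrite ?filter_uniq ?low_uniq //.
move=> q; rewrite mem_filter !mem_low; case h: (mle q p) => //=.
by rewrite (mle_trans h hp).
Qed.

Lemma sum_low_ge (e q : mon m) (F : mon m -> K) : mle q e ->
  \sum_(p <- low e | mle q p) F p = \sum_(r <- low (msub e q)) F (madd q r).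
Proof.
move=> hq; rewrite -big_filter -(big_map (madd q) xpredT); apply: perm_sum.
- by rewrite filter_uniq ?low_uniq.
- rewrite map_inj_in_uniq ?low_uniq // => r1 r2 _ _ eq.
  by rewrite -(maddK q r1) eq maddK.
move=> p; rewrite mem_filter mem_low; apply/andP/mapP.
- case=> h1 h2; exists (msub p q); last by rewrite madd_sub.
  by rewrite mem_low mle_subr.
- case=> r; rewrite mem_low => hr ->; split; first exact: mle_addl.
  exact: mle_addr.
Qed.

Lemma mulA (f g h : ps K m) : ps_mul f (ps_mul g h) = ps_mul (ps_mul f g) h.
Proof.
apply: psE => e; rewrite [RHS]mul_low.
transitivity (\sum_(p <- low e) \sum_(q <- low e) (if mle q p then f q * g (msub p q) * h (msub e p) else 0)).
  2: { rewrite big_seq_cond [RHS]big_seq_cond; apply: eq_bigr => p /andP [].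
       rewrite mem_low => hp _; rewrite mul_low mulr_suml (sum_low_le _ hp) [RHS]big_mkcond.
       by []. }
rewrite exchange_big mul_low big_seq_cond [RHS]big_seq_cond; apply: eq_bigr => q /andP [].
rewrite mem_low => hq _; rewrite -big_mkcond /= (sum_low_ge _ hq) mul_low mulr_sumr.
apply: eq_bigr => r _; rewrite maddK msub_madd mulrA //.
Qed.

Lemma mulDr (f g h : ps K m) : ps_mul f (ps_add g h) = ps_add (ps_mul f g) (ps_mul f h).
Proof. apply: psE => e; rewrite /ps_add !mul_low -big_split; apply: eq_bigr => p _; exact: mulrDr. Qed.

Lemma mul0 (f : ps K m) : ps_mul f (@ps_zero K m) = @ps_zero K m.
Proof. apply: psE => e; rewrite mul_low big1 // => p _; exact: mulr0. Qed.

Lemma mulN (f g : ps K m) : ps_mul f (ps_opp g) = ps_opp (ps_mul f g).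
Proof. apply: psE => e; rewrite /ps_opp !mul_low -sumrN; apply: eq_bigr => p _; exact: mulrN. Qed.

Lemma mul1 (f : ps K m) : ps_mul (@ps_one K m) f = f.
Proof. apply: psE => e; rewrite /ps_one mul_ind. have -> : ((0%N, [ffun => 0%N]) : mon m) = mzero by [].
by rewrite mle0 msub0. Qed.

Lemma ind_mul (e1 e2 : mon m) : ps_mul (ps_ind K e1) (ps_ind K e2) = ps_ind K (madd e1 e2).
Proof.
apply: psE => e; rewrite mul_ind /ps_ind.
case: (boolP (e == madd e1 e2)) => [/eqP ->|ne].
  by rewrite mle_addl maddK eqxx.
case: ifP => // h; case: eqP => // eq; case/negP: ne; by rewrite -eq madd_sub.
Qed.

Lemma mulDl (f g h : ps K m) : ps_mul (ps_add g h) f = ps_add (ps_mul g f) (ps_mul h f).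
Proof. by rewrite mulC mulDr !(mulC f). Qed.
Lemma mul0l (f : ps K m) : ps_mul (@ps_zero K m) f = @ps_zero K m.
Proof. by rewrite mulC mul0. Qed.
Lemma mulCA (f g h : ps K m) : ps_mul f (ps_mul g h) = ps_mul g (ps_mul f h).
Proof. by rewrite mulA (mulC f) -mulA. Qed.

Lemma powS (f : ps K m) n : ps_pow f n.+1 = ps_mul f (ps_pow f n).
Proof. by []. Qed.

Lemma powx k : ps_pow (@ps_x K m) k = ps_ind K ((k, [ffun => 0%N]) : mon m).
Proof.
elim: k => [|k IH]; first by [].
rewrite powS IH /ps_x ind_mul; congr ps_ind; apply: monP => //= i; rewrite !ffunE //.
Qed.

Lemma powy (i : 'I_m) j : ps_pow (ps_y K i) j = ps_ind K ((0%N, [ffun l => (j * (l == i))%N]) : mon m).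
Proof.
elim: j => [|j IH].
  rewrite /ps_pow /=; congr ps_ind; apply: monP => //= l; rewrite !ffunE //.
rewrite powS IH /ps_y ind_mul; congr ps_ind; apply: monP => //= l; rewrite !ffunE; lia.
Qed.

Lemma ymon_seq (al : {ffun 'I_m -> nat}) (s : seq 'I_m) :
  foldr (fun i acc => ps_mul (ps_pow (ps_y K i) (al i)) acc) (@ps_one K m) s =
  ps_ind K ((0%N, [ffun l => (\sum_(i <- s) al i * (l == i))%N]) : mon m).
Proof.
elim: s => [|i s IH] /=.
  rewrite /ps_one; congr ps_ind; apply: monP => //= l; by rewrite !ffunE big_nil.
rewrite IH powy ind_mul; congr ps_ind; apply: monP => //= l; by rewrite !ffunE big_cons.
Qed.

Lemma ymonE (al : {ffun 'I_m -> nat}) : ps_ymon K al = ps_ind K ((0%N, al) : mon m).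
Proof.
rewrite /ps_ymon ymon_seq; congr ps_ind; apply: monP => //= l; rewrite !ffunE big_enum /=.
rewrite (bigD1 l) //= eqxx muln1 big1 ?addn0 // => i /negbTE.
by rewrite eq_sym => ->; rewrite muln0.
Qed.

Lemma monomE k (al : {ffun 'I_m -> nat}) :
  ps_mul (ps_pow (@ps_x K m) k) (ps_ymon K al) = ps_ind K ((k, al) : mon m).
Proof.
rewrite powx ymonE ind_mul; congr ps_ind; apply: monP => /=[|l]; rewrite ?ffunE; lia.
Qed.

End PSRing.

Section Gen.
Variables (T : Type) (add mul : T -> T -> T) (zero : T).
Lemma gen_ideal G : is_ideal add mul zero (ideal_gen add mul zero G).
Proof.
split.
- by move=> I [h0 _ _] _.
- move=> u v hu hv I hI hG; case: (hI) => _ hadd _; apply: hadd; [exact: hu|exact: hv].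
- move=> r u hu I hI hG; case: (hI) => _ _ hmul; apply: hmul; exact: hu.
Qed.
Lemma gen_in (G : T -> Prop) u : G u -> ideal_gen add mul zero G u.
Proof. by move=> hu I _ hG; apply: hG. Qed.
Lemma gen_min (G I : T -> Prop) : is_ideal add mul zero I ->
  (forall u, G u -> I u) -> forall u, ideal_gen add mul zero G u -> I u.
Proof. by move=> hI hG u hu; apply: hu. Qed.
End Gen.

Section Main.
Variables (K : fieldType) (m : nat).
Local Open Scope ring_scope.
Local Notation PS := (ps K m).
Local Notation isI := (is_ideal (@ps_add K m) (@ps_mul K m) (@ps_zero K m)).
Local Notation Ypow := (Sideal_pow (@Yideal K m)).

Lemma Ypow_ideal j : isI (Ypow j).
Proof. by case: j => [|j]; apply: gen_ideal. Qed.

Lemma Ypow_S j w : Ypow j.+1 w -> Ypow j w.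
Proof.
apply: gen_min; first exact: Ypow_ideal.
move=> u [x [v [_ hv ->]]]; case: (Ypow_ideal j) => _ _ hm; exact: hm.
Qed.

Lemma Ypow_mono j j' w : (j <= j')%N -> Ypow j' w -> Ypow j w.
Proof.
move/subnK <-; elim: (j' - j)%N => [|d IH] //= h; apply: IH; exact: Ypow_S.
Qed.

Definition addi (al : {ffun 'I_m -> nat}) (i : 'I_m) : {ffun 'I_m -> nat} :=
  [ffun l => (al l + (l == i))%N].

Lemma sum_addi al i : (\sum_(l < m) addi al i l = \sum_(l < m) al l + 1)%N.
Proof.
rewrite /addi; under eq_bigr do rewrite ffunE; rewrite big_split /=; congr addn.
by rewrite (bigD1 i) //= eqxx big1 // => l /negbTE ->.
Qed.

Lemma ideal_ind (R : PS -> Prop) (Q : nat -> {ffun 'I_m -> nat} -> Prop) :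
  isI R -> isI (fun w => forall k (al : {ffun 'I_m -> nat}), Q k al -> R (ps_mul (ps_ind K ((k, al) : mon m)) w)).
Proof.
case=> h0 hD hM; split.
- by move=> k al _; rewrite mul0.
- by move=> u v hu hv k al hq; rewrite mulDr; apply: hD; [exact: hu|exact: hv].
- by move=> r u hu k al hq; rewrite mulCA; apply: hM; exact: hu.
Qed.

Lemma keyL (R : PS -> Prop) (C : nat -> nat -> Prop) :
  isI R ->
  (forall k (al : {ffun 'I_m -> nat}), C k (\sum_(i < m) al i)%N -> R (ps_ind K ((k, al) : mon m))) ->
  forall j w, Ypow j w ->
  forall k (al : {ffun 'I_m -> nat}), C k (\sum_(i < m) al i + j)%N -> R (ps_mul (ps_ind K ((k, al) : mon m)) w).
Proof.
move=> hR hH j; elim: j => [|j IH] w hw.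
- apply: (gen_min (ideal_ind _ hR) _ hw) => u -> k al hc.
  rewrite mulC mul1; apply: hH; by rewrite addn0 in hc.
- apply: (gen_min (ideal_ind _ hR) _ hw) => z [u [v [hu hv ->]]].
  have hU : isI (fun u => forall k (al : {ffun 'I_m -> nat}), C k (\sum_(i < m) al i + j.+1)%N ->
                  R (ps_mul (ps_ind K ((k, al) : mon m)) (ps_mul u v))).
    case: hR => h0 hD hM; split.
    + by move=> k al _; rewrite mul0l mul0.
    + by move=> u1 u2 h1 h2 k al hc; rewrite mulDl mulDr; apply: hD; [exact: h1|exact: h2].
    + by move=> r u1 h1 k al hc; rewrite -mulA mulCA; apply: hM; exact: h1.
  apply: (gen_min hU _ hu) => y [i ->] k al hc.
  rewrite mulA /ps_y ind_mul.
  have -> : madd ((k, al) : mon m) (0%N, [ffun j0 => nat_of_bool (j0 == i)]) = (k, addi al i).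
    by apply: monP => //= [|l]; rewrite ?ffunE ?addn0.
  apply: IH => //; by rewrite sum_addi -addnA add1n.
Qed.

Lemma ymon_aux s : forall al : {ffun 'I_m -> nat}, (\sum_(i < m) al i)%N = s ->
  Ypow s (ps_ind K ((0%N, al) : mon m)).
Proof.
elim: s => [|s IH] al hs.
- have -> : ((0%N, al) : mon m) = (0%N, [ffun => 0%N]).
    apply: monP => //= i; rewrite ffunE.
    move/eqP: hs; rewrite sum_nat_eq0 => /forallP /(_ i) /eqP //.
  by apply: gen_in.
- case: (pickP (fun i => (0 < al i)%N)) => [i hi|h]; last first.
    have : (\sum_(i < m) al i)%N = 0%N.
      apply: big1 => i _; have := h i; rewrite /= lt0n => /negbFE /eqP //.
    by rewrite hs.
  pose be := [ffun l => (al l - (l == i))%N].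
  have hal : al = addi be i.
    apply/ffunP => l; rewrite !ffunE; case: eqP => [->|]; simpl; lia.
  apply: gen_in; exists (ps_y K i), (ps_ind K ((0%N, be) : mon m)); split.
  + apply: gen_in; by exists i.
  + apply: IH; move: hs; rewrite hal sum_addi addn1; by case.
  + rewrite /ps_y ind_mul; congr ps_ind; apply: monP => //= l; rewrite hal !ffunE; lia.
Qed.

Lemma ymon_in (al : {ffun 'I_m -> nat}) : Ypow (\sum_(i < m) al i)%N (ps_ind K ((0%N, al) : mon m)).
Proof. exact: ymon_aux. Qed.

Lemma in_bigsum (I : eqType) (r : seq I) (F : I -> PS -> Prop) (i : I) (z : PS) :
  i \in r -> F i z ->
  (\big[@Sideal_sum K m/@Sideal_gen K m (fun _ => False)]_(j <- r) F j) z.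
Proof.
elim: r => [|x r IH] //; rewrite big_cons inE => /orP [/eqP <- | hi] hz; apply: gen_in.
  by left.
by right; apply: IH.
Qed.

Lemma bigsum_sub (I : Type) (r : seq I) (P : pred I) (F : I -> PS -> Prop) (R : PS -> Prop) :
  isI R -> (forall i z, F i z -> R z) ->
  forall z, (\big[@Sideal_sum K m/@Sideal_gen K m (fun _ => False)]_(j <- r | P j) F j) z -> R z.
Proof.
move=> hR hF; apply: (big_ind (fun J : PS -> Prop => forall z, J z -> R z)).
- by apply: gen_min.
- move=> x y hx hy; apply: (gen_min hR) => u []; [exact: hx | exact: hy].
- by move=> i _; exact: hF.
Qed.

Lemma sum_min (I J R : PS -> Prop) : isI R -> (forall u, I u -> R u) -> (forall u, J u -> R u) ->
  forall u, Sideal_sum I J u -> R u.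
Proof. move=> hR hI hJ; apply: gen_min => // u [] ; [exact: hI | exact: hJ]. Qed.

Lemma sum_l (I J : PS -> Prop) u : I u -> Sideal_sum I J u.
Proof. by move=> h; apply: gen_in; left. Qed.
Lemma sum_r (I J : PS -> Prop) u : J u -> Sideal_sum I J u.
Proof. by move=> h; apply: gen_in; right. Qed.

Lemma mul_min (I J R : PS -> Prop) : isI R -> (forall u v, I u -> J v -> R (ps_mul u v)) ->
  forall w, Sideal_mul I J w -> R w.
Proof. move=> hR h; apply: gen_min => // w [u [v [hu hv ->]]]; exact: h. Qed.

Lemma mul_in (I J : PS -> Prop) u v : I u -> J v -> Sideal_mul I J (ps_mul u v).
Proof. by move=> hu hv; apply: gen_in; exists u, v. Qed.

Lemma princ_min (c : PS) (R : PS -> Prop) : isI R -> R c -> forall u, Sprincipal c u -> R u.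
Proof. by move=> hR hc; apply: gen_min => // u ->. Qed.

Lemma princ_in (c : PS) : Sprincipal c c.
Proof. by apply: gen_in. Qed.

End Main.

Unset Implicit Arguments.

Theorem proposition5p1 (K : closedFieldType) (m a b : nat) (g : ps K m) :
  (1 <= m)%N -> (2 <= a)%N -> (a <= b)%N ->
  only_y g ->
  Sideal_pow (@Yideal K m) b g -> ~ Sideal_pow (@Yideal K m) b.+1 g ->
  let d := gcdn a b in
  let a' := (a %/ d)%N in
  let b' := (b %/ d)%N in
  let f := ps_sub (ps_pow (@ps_x K m) a) g in
  forall n : nat, (1 <= n)%N ->
  forall z : ps K m,
    Sideal_sum (@JS K m a b n) (Sprincipal f) z <->
    Sideal_sum (@IS K m a' b' (n * a')) (Sprincipal f) z.
Proof.
move=> hm ha hab hog hgb hgnb d a' b' f n hn z.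
have a0 : (0 < a)%N by lia.
have d0 : (0 < d)%N by rewrite /d gcdn_gt0 a0.
have ea : a = (a' * d)%N by rewrite /a' /d divnK ?dvdn_gcdl.
have eb : b = (b' * d)%N by rewrite /b' /d divnK ?dvdn_gcdr.
have a'0 : (0 < a')%N by move: a0; rewrite ea muln_gt0 => /andP [].
have hab' : (a * b' = b * a')%N by rewrite ea eb; nia.
have hnk : forall k, nk a b k = (k * b' %/ a')%N.
  by move=> k; rewrite /nk ea eb mulnA divnMr.
pose LHS := Sideal_sum (@JS K m a b n) (Sprincipal f).
pose RHS := Sideal_sum (@IS K m a' b' (n * a')) (Sprincipal f).
have hL : is_ideal (@ps_add K m) (@ps_mul K m) (@ps_zero K m) LHS by apply: gen_ideal.
have hR : is_ideal (@ps_add K m) (@ps_mul K m) (@ps_zero K m) RHS by apply: gen_ideal.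
have fL : LHS f by apply: gen_in; right; apply: gen_in.
have fR : RHS f by apply: gen_in; right; apply: gen_in.
have pf : forall (R : ps K m -> Prop), is_ideal (@ps_add K m) (@ps_mul K m) (@ps_zero K m) R ->
    R f -> forall u, Sprincipal f u -> R u.
  by move=> R hI hf; apply: (gen_min hI) => u ->.
split.
- apply: (sum_min hR); last exact: pf hR fR.
  move=> u hu.
  apply: (bigsum_sub hR _ hu) => k v.
  apply: (mul_min hR) => u0 w hu0 hw.
  have hU : is_ideal (@ps_add K m) (@ps_mul K m) (@ps_zero K m)
      (fun u0 => forall w, Sideal_pow (@Yideal K m) (n - nk a b k) w -> RHS (ps_mul u0 w)).
    case: (hR) => h0 hD hM; split.
    + by move=> w0 _; rewrite mul0l.
    + by move=> u1 u2 h1 h2 w0 hw0; rewrite mulDl; apply: hD; [exact: h1|exact: h2].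
    + by move=> r u1 h1 w0 hw0; rewrite -mulA; apply: hM; exact: h1.
  apply: (princ_min hU _ hu0 w hw) => w' hw'.
  rewrite powx.
  apply: (keyL (C := fun k s => (n * a' <= k * b' + s * a')%N) hR _ hw').
  + move=> k' al hc; apply: gen_in; left; apply: gen_in; exists k', al; split => //.
    by rewrite monomE.
  + have -> : (\sum_(i < m) ([ffun=> 0%N] : {ffun 'I_m -> nat}) i)%N = 0%N.
      by apply: big1 => i _; rewrite ffunE.
    rewrite hnk add0n mulnBl; have := leq_divM (k * b') a'; lia.
- apply: (sum_min hL); last exact: pf hL fL.
  move=> u hu.
  apply: (gen_min hL _ hu) => _ [k [al [hk ->]]]; rewrite monomE.
  elim/ltn_ind: k al hk => k IH al hk.
  case: (ltnP k a) => hka.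
  + have -> : ps_ind K ((k, al) : mon m) = ps_mul (ps_pow (@ps_x K m) k) (ps_ind K ((0%N, al) : mon m)).
      rewrite powx ind_mul; congr ps_ind; apply: monP => //= [|l]; rewrite ?ffunE; lia.
    apply: gen_in; left.
    apply: (in_bigsum (i := Ordinal hka)); first exact: mem_index_enum.
    apply: gen_in; exists (ps_pow (@ps_x K m) k), (ps_ind K ((0%N, al) : mon m)); split => //.
      by apply: gen_in.
    apply: (Ypow_mono _ (ymon_in _ al)).
    rewrite hnk /=; set q := (k * b' %/ a')%N.
    have e1 := divn_eq (k * b') a'; have e2 := ltn_pmod (k * b') a'0.
    have : (n * a' < (q + \sum_(i < m) al i).+1 * a')%N.
      rewrite mulSn mulnDl; rewrite -/q in e1; lia.
    rewrite ltn_pmul2r //; move: (\sum_(i < m) al i)%N => s; clearbody q; lia.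
  + have eq : ps_ind K ((k, al) : mon m) =
        ps_add (ps_mul (ps_ind K ((k - a)%N, al)) f) (ps_mul (ps_ind K ((k - a)%N, al)) g).
      rewrite /f /ps_sub mulDr mulN powx ind_mul.
      have -> : madd ((k - a)%N, al) ((a, [ffun=> 0%N]) : mon m) = ((k, al) : mon m).
        apply: monP => //= [|l]; rewrite ?ffunE; lia.
      apply: psE => e; rewrite /ps_add /ps_opp; by rewrite addrNK.
    rewrite eq; case: (hL) => _ hD hM; apply: hD; first exact: hM _ _ fL.
    apply: (keyL (C := fun k' s => (k' < k)%N /\ (n * a' <= k' * b' + s * a')%N) hL _ hgb).
      by move=> k' al' [hk' hc]; exact: IH.
    split; first lia.
    rewrite mulnBl mulnDl; have := leq_mul hka (leqnn b'); lia.
Qed.
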